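(* Let $t\in\mathbb{Q}$, $t\neq 2$. Let $[x,y,1]$ be a point of $F_5\cap C_t$ (over $\overline{\mathbb{Q}}$) distinct from $P=[\zeta_3,\zeta_3^2,1]$ and $\overline P=[\zeta_3^2,\zeta_3,1]$. Then $f_t(x)=0$ and $y=\sum_{i=0}^5 a_i x^i$.
   Context: $F_5$ is the Fermat curve $x^5+y^5+z^5=0$ in $\mathbb{P}^2$; $\zeta_3$ is a primitive cube root of unity. For $t\in\mathbb{Q}$, $t\neq2$, $C_t$ is the conic $x^2+y^2+z^2+t(xy+xz+yz)=0$. Put $u=\frac{3t^2-2t+2}{t^2+t-1}$, $v=\frac{t^5-5t^4+10t^3-20t^2+15t-7}{(t-2)(t^2+t-1)^2}$, $w=\frac{-3t^5+10t^4-20t^3+20t^2-20t+6}{(t-2)(t^2+t-1)^2}$, and $f_t=X^6+uX^5+vX^4+wX^3+vX^2+uX+1\in\mathbb{Q}[X]$. Put $s=(t^4-3t^3-t^2+3t+1)(t-2)$ (nonzero for rational $t\ne2$) and $a_0=-\frac{(t^2+1)(t^3-t^2+2t-3)}{s}$, $a_1=-\frac{3t^7-9t^6+16t^5-15t^4+10t^3-11t^2+8t-7}{(t^2+t-1)s}$, $a_2=\frac{2t^8-14t^7+52t^6-99t^5+100t^4-54t^3+38t^2-44t+13}{(t^2+t-1)(t-2)s}$, $a_3=\frac{t^8+t^7-21t^6+65t^5-90t^4+78t^3-57t^2+32t-15}{(t^2+t-1)(t-2)s}$, $a_4=-\frac{2t^5-6t^4+13t^3-14t^2+7t-5}{s}$,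 $a_5=-\frac{(t^2+t-1)(t^3-t^2+2t-3)}{s}$. *)

(* Defs.v *)
From mathcomp Require Import all_boot all_order all_algebra all_field.
Set Implicit Arguments. Unset Strict Implicit. Unset Printing Implicit Defensive.
Import Order.TTheory GRing.Theory Num.Theory.
Local Open Scope ring_scope.

Definition ut (t : rat) : rat := (3 * t ^+ 2 - 2 * t + 2) / (t ^+ 2 + t - 1).
Definition vt (t : rat) : rat :=
  (t ^+ 5 - 5 * t ^+ 4 + 10 * t ^+ 3 - 20 * t ^+ 2 + 15 * t - 7)
  / ((t - 2) * (t ^+ 2 + t - 1) ^+ 2).
Definition wt (t : rat) : rat :=
  (- 3 * t ^+ 5 + 10 * t ^+ 4 - 20 * t ^+ 3 + 20 * t ^+ 2 - 20 * t + 6)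
  / ((t - 2) * (t ^+ 2 + t - 1) ^+ 2).

Definition ft (t : rat) : {poly rat} :=
  Poly [:: 1; ut t; vt t; wt t; vt t; ut t; 1].

Definition st (t : rat) : rat :=
  (t ^+ 4 - 3 * t ^+ 3 - t ^+ 2 + 3 * t + 1) * (t - 2).

Definition a0 (t : rat) : rat :=
  - ((t ^+ 2 + 1) * (t ^+ 3 - t ^+ 2 + 2 * t - 3)) / st t.
Definition a1 (t : rat) : rat :=
  - (3 * t ^+ 7 - 9 * t ^+ 6 + 16 * t ^+ 5 - 15 * t ^+ 4 + 10 * t ^+ 3
     - 11 * t ^+ 2 + 8 * t - 7) / ((t ^+ 2 + t - 1) * st t).
Definition a2 (t : rat) : rat :=
  (2 * t ^+ 8 - 14 * t ^+ 7 + 52 * t ^+ 6 - 99 * t ^+ 5 + 100 * t ^+ 4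
   - 54 * t ^+ 3 + 38 * t ^+ 2 - 44 * t + 13)
  / ((t ^+ 2 + t - 1) * (t - 2) * st t).
Definition a3 (t : rat) : rat :=
  (t ^+ 8 + t ^+ 7 - 21 * t ^+ 6 + 65 * t ^+ 5 - 90 * t ^+ 4 + 78 * t ^+ 3
   - 57 * t ^+ 2 + 32 * t - 15)
  / ((t ^+ 2 + t - 1) * (t - 2) * st t).
Definition a4 (t : rat) : rat :=
  - (2 * t ^+ 5 - 6 * t ^+ 4 + 13 * t ^+ 3 - 14 * t ^+ 2 + 7 * t - 5) / st t.
Definition a5 (t : rat) : rat :=
  - ((t ^+ 2 + t - 1) * (t ^+ 3 - t ^+ 2 + 2 * t - 3)) / st t.

Definition acoef (t : rat) (i : nat) : rat :=
  nth 0 [:: a0 t; a1 t; a2 t; a3 t; a4 t; a5 t] i.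

(* Main.v *)
From mathcomp Require Import all_boot all_order all_algebra all_field.
Require Import Defs.
From mathcomp Require Import zify ring lra.
Import Order.TTheory GRing.Theory Num.Theory.
Local Open Scope ring_scope.

Lemma int_split (n : int) : exists a b : int, n = 2 * a + b /\ (b = 0 \/ b = 1).
Proof.
exists (n %/ 2)%Z, (n %% 2)%Z; split.
  by rewrite {1}(divz_eq n 2) mulrC.
have h1 : (0 <= (n %% 2)%Z) := modz_ge0 n (isT : (2:int) != 0).
have h2 : ((n %% 2)%Z < 2) := ltz_pmod n (isT : (0:int) < 2).
lia.
Qed.

Lemma not_both_even (a c : int) : ~~ coprime (absz (2 * a + 0)) (absz (2 * c + 0)).
Proof.
rewrite !addr0 !abszM /coprime -muln_gcdr; lia.
Qed.

Lemma par2 (n d : int) : coprime `|n| `|d| -> n^+2 + n*d - d^+2 != 0.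
Proof.
move=> cop.
have [a [b [hn hb]]] := int_split n; have [c [e [hd he]]] := int_split d.
subst n d.
have -> : (2 * a + b) ^+ 2 + (2 * a + b) * (2 * c + e) - (2 * c + e) ^+ 2 =
  2 * ((-2)*c*e + (-2)*c^+2 + (1)*b*c + (1)*a*e + (2)*a*c + (2)*a*b + (2)*a^+2)
  + (b^+2 + b*e - e^+2) by ring.
move: (X in 2 * X + _) => K.
case: hb => ?; case: he => ?; subst b e; rewrite ?expr0n /= ?expr1n; try lia.
by move: cop; rewrite (negPf (not_both_even _ _)).
Qed.

Lemma par4 (n d : int) : coprime `|n| `|d| ->
  n^+4 - 3*n^+3*d - n^+2*d^+2 + 3*n*d^+3 + d^+4 != 0.
Proof.
move=> cop.
have [a [b [hn hb]]] := int_split n; have [c [e [hd he]]] := int_split d.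
subst n d.
have -> : (2 * a + b)^+4 - 3*(2 * a + b)^+3*(2 * c + e) - (2 * a + b)^+2*(2 * c + e)^+2
   + 3*(2 * a + b)*(2 * c + e)^+3 + (2 * c + e)^+4 =
  2 * ((4)*c*e^+3 + (12)*c^+2*e^+2 + (16)*c^+3*e + (8)*c^+4 + (9)*b*c*e^+2 + (18)*b*c^+2*e + (12)*b*c^+3 + (-2)*b^+2*c*e + (-2)*b^+2*c^+2 + (-3)*b^+3*c + (3)*a*e^+3 + (18)*a*c*e^+2 + (36)*a*c^+2*e + (24)*a*c^+3 + (-2)*a*b*e^+2 + (-8)*a*b*c*e + (-8)*a*b*c^+2 + (-9)*a*b^+2*e + (-18)*a*b^+2*c + (4)*a*b^+3 + (-2)*a^+2*e^+2 + (-8)*a^+2*c*e + (-8)*a^+2*c^+2 + (-18)*a^+2*b*e + (-36)*a^+2*b*c + (12)*a^+2*b^+2 + (-12)*a^+3*e + (-24)*a^+3*c + (16)*a^+3*b + (8)*a^+4)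
  + (b^+4 - 3*b^+3*e - b^+2*e^+2 + 3*b*e^+3 + e^+4) by ring.
move: (X in 2 * X + _) => K.
case: hb => ?; case: he => ?; subst b e; rewrite ?expr0n /= ?expr1n; try lia.
by move: cop; rewrite (negPf (not_both_even _ _)).
Qed.

Lemma ratq2 (t : rat) : t^+2 + t - 1 != 0.
Proof.
have E : forall n d : int, d%:~R != 0 :> rat ->
   (n^+2 + n * d - d^+2)%:~R = (d%:~R)^+2 * ((n%:~R / d%:~R)^+2 + n%:~R / d%:~R - 1) :> rat.
  move=> n d hd; rewrite !(rmorphB, rmorphD, rmorphXn, rmorphM) /=.
  by field.
have hd : (denq t)%:~R != 0 :> rat by rewrite intr_eq0 denq_neq0.
have := E (numq t) (denq t) hd; rewrite divq_num_den.
apply/contra_eqN => /eqP ->; rewrite mulr0 intr_eq0.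
exact: par2 (coprime_num_den t).
Qed.

Lemma ratq4 (t : rat) : t^+4 - 3*t^+3 - t^+2 + 3*t + 1 != 0.
Proof.
have E : forall n d : int, d%:~R != 0 :> rat ->
   (n^+4 - 3*n^+3*d - n^+2*d^+2 + 3*n*d^+3 + d^+4)%:~R
   = (d%:~R)^+4 * ((n%:~R / d%:~R)^+4 - 3*(n%:~R / d%:~R)^+3 - (n%:~R / d%:~R)^+2
                   + 3*(n%:~R / d%:~R) + 1) :> rat.
  move=> n d hd; rewrite !(rmorphB, rmorphD, rmorphXn, rmorphM) /=.
  by field.
have hd : (denq t)%:~R != 0 :> rat by rewrite intr_eq0 denq_neq0.
have := E (numq t) (denq t) hd; rewrite divq_num_den.
apply/contra_eqN => /eqP ->; rewrite mulr0 intr_eq0.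
exact: par4 (coprime_num_den t).
Qed.

Definition uA (T : algC) := (3*T^+2 - 2*T + 2) / (T^+2 + T - 1).
Definition vA (T : algC) := (T^+5 - 5*T^+4 + 10*T^+3 - 20*T^+2 + 15*T - 7) / ((T - 2) * (T^+2 + T - 1)^+2).
Definition wA (T : algC) := (- 3*T^+5 + 10*T^+4 - 20*T^+3 + 20*T^+2 - 20*T + 6) / ((T - 2) * (T^+2 + T - 1)^+2).
Definition fA (T x : algC) := x^+6 + uA T * x^+5 + vA T * x^+4 + wA T * x^+3 + vA T * x^+2 + uA T * x + 1.
Definition stA (T : algC) := (T^+4 - 3*T^+3 - T^+2 + 3*T + 1) * (T - 2).
Definition aA0 (T : algC) := - ((T ^+ 2 + 1) * (T ^+ 3 - T ^+ 2 + 2 * T - 3)) / stA T.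
Definition aA1 (T : algC) :=
  - (3 * T ^+ 7 - 9 * T ^+ 6 + 16 * T ^+ 5 - 15 * T ^+ 4 + 10 * T ^+ 3
     - 11 * T ^+ 2 + 8 * T - 7) / ((T ^+ 2 + T - 1) * stA T).
Definition aA2 (T : algC) :=
  (2 * T ^+ 8 - 14 * T ^+ 7 + 52 * T ^+ 6 - 99 * T ^+ 5 + 100 * T ^+ 4
   - 54 * T ^+ 3 + 38 * T ^+ 2 - 44 * T + 13)
  / ((T ^+ 2 + T - 1) * (T - 2) * stA T).
Definition aA3 (T : algC) :=
  (T ^+ 8 + T ^+ 7 - 21 * T ^+ 6 + 65 * T ^+ 5 - 90 * T ^+ 4 + 78 * T ^+ 3
   - 57 * T ^+ 2 + 32 * T - 15)
  / ((T ^+ 2 + T - 1) * (T - 2) * stA T).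
Definition aA4 (T : algC) :=
  - (2 * T ^+ 5 - 6 * T ^+ 4 + 13 * T ^+ 3 - 14 * T ^+ 2 + 7 * T - 5) / stA T.
Definition aA5 (T : algC) :=
  - ((T ^+ 2 + T - 1) * (T ^+ 3 - T ^+ 2 + 2 * T - 3)) / stA T.
Definition AA (T x : algC) := aA0 T + aA1 T * x + aA2 T * x^+2 + aA3 T * x^+3 + aA4 T * x^+4 + aA5 T * x^+5.

Definition hP (T s : algC) := (T^+2*s^+3 + 3*T^+2*s^+2 - 2*T^+2*s + T^+2 + T*s^+3 - 2*T*s^+2 + 8*T*s - 4*T - s^+3 + 2*s^+2 - 3*s + 4).
Definition quoP (T x s : algC) := (T^+3*x + T^+3 - T^+2*x - T^+2*s - 2*T^+2 - 3*T*x - T*s + T + 2*x + s - 2).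
Definition r1P (T x : algC) := (T^+4*x^+2 + 2*T^+4*x + T^+4 - 2*T^+3*x^+2 - 5*T^+3*x - 2*T^+3 - 2*T^+2*x^+2 + 2*T^+2*x - 2*T^+2 + 5*T*x^+2 - 2*T*x + 5*T - 2*x^+2 + 4*x - 2).
Definition r0P (T x : algC) := (- T^+4*x^+3 - T^+4*x^+2 + 3*T^+3*x^+3 + 4*T^+3*x^+2 + T^+3*x + T^+3 + T^+2*x^+3 - 5*T^+2*x^+2 - T^+2*x - T^+2 - 8*T*x^+3 + 4*T*x^+2 - 3*T*x - 3*T + 4*x^+3 - 4*x^+2 + 2*x + 2).
Definition FP (T x : algC) := (T^+7*x^+6 + 3*T^+7*x^+5 + T^+7*x^+4 - 3*T^+7*x^+3 + T^+7*x^+2 + 3*T^+7*x + T^+7 - 4*T^+6*x^+6 - 17*T^+6*x^+5 - 9*T^+6*x^+4 + 22*T^+6*x^+3 - 9*T^+6*x^+2 - 17*T^+6*x - 4*T^+6 - T^+5*x^+6 + 27*T^+5*x^+5 + 34*T^+5*x^+4 - 72*T^+5*x^+3 + 34*T^+5*x^+2 + 27*T^+5*x - T^+5 + 20*T^+4*x^+6 + 10*T^+4*x^+5 - 80*T^+4*x^+4 + 140*T^+4*x^+3 - 80*T^+4*x^+2 + 10*T^+4*x + 20*T^+4 - 15*T^+3*x^+6 - 70*T^+3*x^+5 + 135*T^+3*x^+4 - 180*T^+3*x^+3 + 135*T^+3*x^+2 - 70*T^+3*x - 15*T^+3 - 22*T^+2*x^+6 + 84*T^+2*x^+5 - 147*T^+2*x^+4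 + 166*T^+2*x^+3 - 147*T^+2*x^+2 + 84*T^+2*x - 22*T^+2 + 28*T*x^+6 - 56*T*x^+5 + 88*T*x^+4 - 104*T*x^+3 + 88*T*x^+2 - 56*T*x + 28*T - 8*x^+6 + 16*x^+5 - 28*x^+4 + 24*x^+3 - 28*x^+2 + 16*x - 8).
Definition W0P (T : algC) := ((5 - 5*T - 4*T^+2 - 13*T^+3 + 20*T^+4 - 5*T^+6 + 2*T^+7 - T^+8) / (1 + 3*T - T^+2 - 3*T^+3 + T^+4)).
Definition W1P (T : algC) := ((-3 + 11*T - 10*T^+2 - 3*T^+3 + 5*T^+4 - T^+5 + 2*T^+6 - T^+8) / (1 + 3*T - T^+2 - 3*T^+3 + T^+4)).

Section S.
Variables (T : algC).
Hypotheses (h2 : T - 2 != 0) (hq : T^+2 + T - 1 != 0) (h4 : T^+4 - 3*T^+3 - T^+2 + 3*T + 1 != 0).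

Lemma stepF x : (T - 2)^+3 * (T^+2 + T - 1)^+2 * fA T x = FP T x.
Proof. rewrite /fA /uA /vA /wA /FP. field. by rewrite h2 hq. Qed.


Lemma stepH x y : x^+5 + y^+5 + 1 = 0 -> x^+2 + y^+2 + 1 + T*(x*y + x + y) = 0 ->
  (x + y + 1)^+2 * hP T (x + y) = 0.
Proof.
move=> HF HC.
have -> : (x + y + 1)^+2 * hP T (x + y) = (T - 2)^+2 * (x^+5 + y^+5 + 1)
   - (x^+2 + y^+2 + 1 + T*(x*y + x + y)) * (-5*(x+y)^+3*(T-2)
      + 5*(x+y)*(x^+2 + y^+2 + 1 + T*(x*y + x + y)) - 10*(x+y)*((x+y)^+2 + T*(x+y) + 1)).
  rewrite /hP; ring.
by rewrite HF HC; ring.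
Qed.

Definition QtP (T x s : algC) := (T - 2)*x^+2 - (T - 2)*s*x - (s^+2 + T*s + 1).

Lemma stepQ x y : x^+2 + y^+2 + 1 + T*(x*y + x + y) = 0 -> QtP T x (x + y) = 0.
Proof.
move=> HC; have -> : QtP T x (x + y) = - (x^+2 + y^+2 + 1 + T*(x*y + x + y)).
  rewrite /QtP; ring.
by rewrite HC oppr0.
Qed.

Lemma stepR x s : hP T s = 0 -> QtP T x s = 0 -> r1P T x * s + r0P T x = 0.
Proof.
move=> Hh HQ; have -> : r1P T x * s + r0P T x = hP T s - quoP T x s * QtP T x s.
  rewrite /r1P /r0P /hP /quoP /QtP; ring.
by rewrite Hh HQ; ring.
Qed.

Lemma stepFx x s : r1P T x * s + r0P T x = 0 -> QtP T x s = 0 -> fA T x = 0.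
Proof.
move=> Hr HQ.
have : FP T x = 0.
  have -> : FP T x = (r1P T x)^+2 * QtP T x s + (r1P T x * s + r0P T x) *
     (r1P T x * s - r0P T x + ((T - 2) * x + T) * r1P T x).
    rewrite /FP /r1P /r0P /QtP; ring.
  by rewrite Hr HQ; ring.
rewrite -stepF => /eqP; rewrite !mulf_eq0 (negPf h2) (negPf hq) /=.
by move/eqP.
Qed.

Lemma stepX0 x : fA T x = 0 -> x != 0.
Proof.
move=> Hf; apply/negP => /eqP x0; move: Hf; rewrite x0 /fA.
have -> : (0:algC) ^+ 6 + uA T * 0 ^+ 5 + vA T * 0 ^+ 4 + wA T * 0 ^+ 3 + vA T * 0 ^+ 2 + uA T * 0 + 1 = 1 by ring.
by move/eqP; rewrite oner_eq0.
Qed.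

Definition CA (T z : algC) := z^+3 + uA T * z^+2 + (vA T - 3) * z + (wA T - 2 * uA T).

Lemma stepR1 x : fA T x = 0 -> r1P T x != 0.
Proof.
move=> Hf; have x0 := stepX0 x Hf.
apply/negP => /eqP H1.
pose L := (T - 2) * (T - 1) * (T^+2 + T - 1).
pose M := 2*T^+4 - 5*T^+3 + 2*T^+2 - 2*T + 4.
have E1 : r1P T x = L * (x^+2 + 1) + M * x by rewrite /r1P /L /M; ring.
have Hz : L * (x + x^-1) + M = 0.
  have : x * (L * (x + x^-1) + M) = 0.
    rewrite -H1 E1; field; exact: x0.
  by move/eqP; rewrite mulf_eq0 (negPf x0) /= => /eqP.
case: (eqVneq (T - 1) 0) => [T1 | T1].
  have HT : T = 1 by rewrite -(subrK 1 T) T1 add0r.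
  move: Hz; rewrite /L /M HT.
  have -> : ((1:algC) - 2) * (1 - 1) * (1 ^+ 2 + 1 - 1) * (x + x^-1) +
     (2 * 1 ^+ 4 - 5 * 1 ^+ 3 + 2 * 1 ^+ 2 - 2 * 1 + 4) = 1 by ring.
  by move/eqP; rewrite oner_eq0.
have L0 : L != 0 by rewrite /L !mulf_neq0.
have Hzz : x + x^-1 = - M / L.
  move/eqP: Hz; rewrite addr_eq0 => /eqP HH; by rewrite -HH mulrAC divff ?mul1r.
have HC : CA T (x + x^-1) = 0.
  have : fA T x = x^+3 * CA T (x + x^-1).
    rewrite /fA /CA; field; exact: x0.
  by rewrite Hf => /esym/eqP; rewrite mulf_eq0 expf_eq0 (negPf x0) andbF /= => /eqP.
have : L^+3 * CA T (x + x^-1) = - ((T - 2)^+4 * (T^+4 - 3*T^+3 - T^+2 + 3*T + 1)^+2).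
  rewrite Hzz /CA /uA /vA /wA /L /M; field.
  by rewrite h2 hq T1.
rewrite HC mulr0 => /eqP; rewrite eq_sym oppr_eq0 mulf_eq0 !expf_eq0 /= (negPf h2) (negPf h4).
done.
Qed.

Lemma stepFinal x s : fA T x = 0 -> r1P T x * s + r0P T x = 0 -> s = x + AA T x.
Proof.
move=> Hf Hr; have r10 := stepR1 x Hf.
have E : r0P T x + r1P T x * (x + AA T x) = (W0P T + W1P T * x) * fA T x.
  rewrite /r0P /r1P /AA /aA0 /aA1 /aA2 /aA3 /aA4 /aA5 /stA /W0P /W1P /fA /uA /vA /wA.
  field.
  rewrite hq h2 /=.
  have -> : (1 + 3 * T - T ^+ 2 - 3 * T ^+ 3 + T ^+ 4) = T^+4 - 3*T^+3 - T^+2 + 3*T + 1 by ring.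
  exact: h4.
have : r1P T x * (s - (x + AA T x)) = 0.
  have -> : r1P T x * (s - (x + AA T x)) = (r1P T x * s + r0P T x) - (r0P T x + r1P T x * (x + AA T x)) by ring.
  by rewrite E Hf Hr; ring.
move/eqP; rewrite mulf_eq0 (negPf r10) /= subr_eq0 => /eqP //.
Qed.

Lemma core x y zeta : 3.-primitive_root zeta ->
  x^+5 + y^+5 + 1 = 0 -> x^+2 + y^+2 + 1 + T*(x*y + x + y) = 0 ->
  (x, y) <> (zeta, zeta^+2) -> (x, y) <> (zeta^+2, zeta) ->
  fA T x = 0 /\ y = AA T x.
Proof.
move=> Hz HF HC N1 N2.
have Hs1 : x + y + 1 != 0.
  apply/negP => /eqP Hs.
  have Hy : y = -1 - x.
    by apply/eqP; rewrite -subr_eq0; apply/eqP; rewrite -Hs; ring.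
  have Hx : x^+2 + x + 1 = 0.
    have : (T - 2) * (x^+2 + x + 1) = 0.
      by rewrite -[RHS]oppr0 -HC Hy; ring.
    by move/eqP; rewrite mulf_eq0 (negPf h2) /= => /eqP.
  have z3 : zeta^+3 = 1 := prim_expr_order Hz.
  have z1 : zeta != 1.
    by have := prim_order_dvd Hz 1; rewrite expr1 => <-.
  have zq : zeta^+2 + zeta + 1 = 0.
    have : (zeta - 1) * (zeta^+2 + zeta + 1) = 0.
      have -> : (zeta - 1) * (zeta^+2 + zeta + 1) = zeta^+3 - 1 by ring.
      by rewrite z3 subrr.
    by move/eqP; rewrite mulf_eq0 subr_eq0 (negPf z1) /= => /eqP.
  have : (x - zeta) * (x - zeta^+2) = 0.
    have -> : (x - zeta) * (x - zeta^+2) = (x^+2 + x + 1) - (zeta^+2 + zeta + 1) * x + (zeta^+3 - 1) by ring.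
    by rewrite Hx zq z3; ring.
  move/eqP; rewrite mulf_eq0 !subr_eq0 => /orP [] /eqP Ex.
    apply: N1; rewrite Ex in Hy *; congr pair; rewrite Hy.
    apply/eqP; rewrite -subr_eq0; apply/eqP.
    have -> : -1 - zeta - zeta ^+ 2 = - (zeta^+2 + zeta + 1) by ring.
    by rewrite zq oppr0.
  apply: N2; rewrite Ex in Hy *; congr pair; rewrite Hy.
  apply/eqP; rewrite -subr_eq0; apply/eqP.
  have -> : -1 - zeta ^+ 2 - zeta = - (zeta^+2 + zeta + 1) by ring.
  by rewrite zq oppr0.
have Hh : hP T (x + y) = 0.
  by move/eqP: (stepH x y HF HC); rewrite mulf_eq0 expf_eq0 (negPf Hs1) andbF /= => /eqP.
have HQ := stepQ x y HC.
have Hr := stepR x (x + y) Hh HQ.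
have Hf := stepFx x (x + y) Hr HQ.
split => //.
by have /addrI := stepFinal x (x + y) Hf Hr.
Qed.
End S.

Lemma gen_ut (F K : fieldType) (f : {rmorphism F -> K}) (t : F) :
  f ((3 * t ^+ 2 - 2 * t + 2) / (t ^+ 2 + t - 1)) = (3 * (f t) ^+ 2 - 2 * (f t) + 2) / ((f t) ^+ 2 + (f t) - 1).
Proof. by rewrite !(fmorph_div, fmorphV, rmorph_nat, rmorph1, rmorphXn, rmorphB, rmorphD, rmorphN, rmorphM). Qed.

Lemma gen_vt (F K : fieldType) (f : {rmorphism F -> K}) (t : F) :
  f ((t ^+ 5 - 5 * t ^+ 4 + 10 * t ^+ 3 - 20 * t ^+ 2 + 15 * t - 7)
  / ((t - 2) * (t ^+ 2 + t - 1) ^+ 2)) = ((f t) ^+ 5 - 5 * (f t) ^+ 4 + 10 * (f t) ^+ 3 - 20 * (f t) ^+ 2 + 15 * (f t) - 7)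
  / (((f t) - 2) * ((f t) ^+ 2 + (f t) - 1) ^+ 2).
Proof. by rewrite !(fmorph_div, fmorphV, rmorph_nat, rmorph1, rmorphXn, rmorphB, rmorphD, rmorphN, rmorphM). Qed.

Lemma gen_wt (F K : fieldType) (f : {rmorphism F -> K}) (t : F) :
  f ((- 3 * t ^+ 5 + 10 * t ^+ 4 - 20 * t ^+ 3 + 20 * t ^+ 2 - 20 * t + 6)
  / ((t - 2) * (t ^+ 2 + t - 1) ^+ 2)) = (- 3 * (f t) ^+ 5 + 10 * (f t) ^+ 4 - 20 * (f t) ^+ 3 + 20 * (f t) ^+ 2 - 20 * (f t) + 6)
  / (((f t) - 2) * ((f t) ^+ 2 + (f t) - 1) ^+ 2).
Proof. by rewrite !(fmorph_div, fmorphV, rmorph_nat, rmorph1, rmorphXn, rmorphB, rmorphD, rmorphN, rmorphM). Qed.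

Lemma gen_a0 (F K : fieldType) (f : {rmorphism F -> K}) (t : F) :
  f (- ((t ^+ 2 + 1) * (t ^+ 3 - t ^+ 2 + 2 * t - 3)) / ((t ^+ 4 - 3 * t ^+ 3 - t ^+ 2 + 3 * t + 1) * (t - 2))) = - (((f t) ^+ 2 + 1) * ((f t) ^+ 3 - (f t) ^+ 2 + 2 * (f t) - 3)) / (((f t) ^+ 4 - 3 * (f t) ^+ 3 - (f t) ^+ 2 + 3 * (f t) + 1) * ((f t) - 2)).
Proof. by rewrite !(fmorph_div, fmorphV, rmorph_nat, rmorph1, rmorphXn, rmorphB, rmorphD, rmorphN, rmorphM). Qed.

Lemma gen_a1 (F K : fieldType) (f : {rmorphism F -> K}) (t : F) :
  f (- (3 * t ^+ 7 - 9 * t ^+ 6 + 16 * t ^+ 5 - 15 * t ^+ 4 + 10 * t ^+ 3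
     - 11 * t ^+ 2 + 8 * t - 7) / ((t ^+ 2 + t - 1) * ((t ^+ 4 - 3 * t ^+ 3 - t ^+ 2 + 3 * t + 1) * (t - 2)))) = - (3 * (f t) ^+ 7 - 9 * (f t) ^+ 6 + 16 * (f t) ^+ 5 - 15 * (f t) ^+ 4 + 10 * (f t) ^+ 3
     - 11 * (f t) ^+ 2 + 8 * (f t) - 7) / (((f t) ^+ 2 + (f t) - 1) * (((f t) ^+ 4 - 3 * (f t) ^+ 3 - (f t) ^+ 2 + 3 * (f t) + 1) * ((f t) - 2))).
Proof. by rewrite !(fmorph_div, fmorphV, rmorph_nat, rmorph1, rmorphXn, rmorphB, rmorphD, rmorphN, rmorphM). Qed.

Lemma gen_a2 (F K : fieldType) (f : {rmorphism F -> K}) (t : F) :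
  f ((2 * t ^+ 8 - 14 * t ^+ 7 + 52 * t ^+ 6 - 99 * t ^+ 5 + 100 * t ^+ 4
   - 54 * t ^+ 3 + 38 * t ^+ 2 - 44 * t + 13)
  / ((t ^+ 2 + t - 1) * (t - 2) * ((t ^+ 4 - 3 * t ^+ 3 - t ^+ 2 + 3 * t + 1) * (t - 2)))) = (2 * (f t) ^+ 8 - 14 * (f t) ^+ 7 + 52 * (f t) ^+ 6 - 99 * (f t) ^+ 5 + 100 * (f t) ^+ 4
   - 54 * (f t) ^+ 3 + 38 * (f t) ^+ 2 - 44 * (f t) + 13)
  / (((f t) ^+ 2 + (f t) - 1) * ((f t) - 2) * (((f t) ^+ 4 - 3 * (f t) ^+ 3 - (f t) ^+ 2 + 3 * (f t) + 1) * ((f t) - 2))).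
Proof. by rewrite !(fmorph_div, fmorphV, rmorph_nat, rmorph1, rmorphXn, rmorphB, rmorphD, rmorphN, rmorphM). Qed.

Lemma gen_a3 (F K : fieldType) (f : {rmorphism F -> K}) (t : F) :
  f ((t ^+ 8 + t ^+ 7 - 21 * t ^+ 6 + 65 * t ^+ 5 - 90 * t ^+ 4 + 78 * t ^+ 3
   - 57 * t ^+ 2 + 32 * t - 15)
  / ((t ^+ 2 + t - 1) * (t - 2) * ((t ^+ 4 - 3 * t ^+ 3 - t ^+ 2 + 3 * t + 1) * (t - 2)))) = ((f t) ^+ 8 + (f t) ^+ 7 - 21 * (f t) ^+ 6 + 65 * (f t) ^+ 5 - 90 * (f t) ^+ 4 + 78 * (f t) ^+ 3
   - 57 * (f t) ^+ 2 + 32 * (f t) - 15)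
  / (((f t) ^+ 2 + (f t) - 1) * ((f t) - 2) * (((f t) ^+ 4 - 3 * (f t) ^+ 3 - (f t) ^+ 2 + 3 * (f t) + 1) * ((f t) - 2))).
Proof. by rewrite !(fmorph_div, fmorphV, rmorph_nat, rmorph1, rmorphXn, rmorphB, rmorphD, rmorphN, rmorphM). Qed.

Lemma gen_a4 (F K : fieldType) (f : {rmorphism F -> K}) (t : F) :
  f (- (2 * t ^+ 5 - 6 * t ^+ 4 + 13 * t ^+ 3 - 14 * t ^+ 2 + 7 * t - 5) / ((t ^+ 4 - 3 * t ^+ 3 - t ^+ 2 + 3 * t + 1) * (t - 2))) = - (2 * (f t) ^+ 5 - 6 * (f t) ^+ 4 + 13 * (f t) ^+ 3 - 14 * (f t) ^+ 2 + 7 * (f t) - 5) / (((f t) ^+ 4 - 3 * (f t) ^+ 3 - (f t) ^+ 2 + 3 * (f t) + 1) * ((f t) - 2)).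
Proof. by rewrite !(fmorph_div, fmorphV, rmorph_nat, rmorph1, rmorphXn, rmorphB, rmorphD, rmorphN, rmorphM). Qed.

Lemma gen_a5 (F K : fieldType) (f : {rmorphism F -> K}) (t : F) :
  f (- ((t ^+ 2 + t - 1) * (t ^+ 3 - t ^+ 2 + 2 * t - 3)) / ((t ^+ 4 - 3 * t ^+ 3 - t ^+ 2 + 3 * t + 1) * (t - 2))) = - (((f t) ^+ 2 + (f t) - 1) * ((f t) ^+ 3 - (f t) ^+ 2 + 2 * (f t) - 3)) / (((f t) ^+ 4 - 3 * (f t) ^+ 3 - (f t) ^+ 2 + 3 * (f t) + 1) * ((f t) - 2)).
Proof. by rewrite !(fmorph_div, fmorphV, rmorph_nat, rmorph1, rmorphXn, rmorphB, rmorphD, rmorphN, rmorphM). Qed.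

Section M.
Variable t : rat.
Local Notation T := (ratr t : algC).
Lemma E_ut : ratr (ut t) = uA T.
Proof. rewrite /ut /uA; exact: gen_ut. Qed.
Lemma E_vt : ratr (vt t) = vA T.
Proof. rewrite /vt /vA; exact: gen_vt. Qed.
Lemma E_wt : ratr (wt t) = wA T.
Proof. rewrite /wt /wA; exact: gen_wt. Qed.
Lemma E_a0 : ratr (a0 t) = aA0 T.
Proof. rewrite /a0 /aA0 /st /stA; exact: gen_a0. Qed.
Lemma E_a1 : ratr (a1 t) = aA1 T.
Proof. rewrite /a1 /aA1 /st /stA; exact: gen_a1. Qed.
Lemma E_a2 : ratr (a2 t) = aA2 T.
Proof. rewrite /a2 /aA2 /st /stA; exact: gen_a2. Qed.
Lemma E_a3 : ratr (a3 t) = aA3 T.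
Proof. rewrite /a3 /aA3 /st /stA; exact: gen_a3. Qed.
Lemma E_a4 : ratr (a4 t) = aA4 T.
Proof. rewrite /a4 /aA4 /st /stA; exact: gen_a4. Qed.
Lemma E_a5 : ratr (a5 t) = aA5 T.
Proof. rewrite /a5 /aA5 /st /stA; exact: gen_a5. Qed.
End M.

Theorem proposition2 (t : rat) (zeta x y : algC) :
  t != 2 ->
  3.-primitive_root zeta ->
  x ^+ 5 + y ^+ 5 + 1 = 0 ->
  x ^+ 2 + y ^+ 2 + 1 + ratr t * (x * y + x + y) = 0 ->
  (x, y) <> (zeta, zeta ^+ 2) ->
  (x, y) <> (zeta ^+ 2, zeta) ->
  root (map_poly ratr (ft t)) x /\
  y = \sum_(i < 6) ratr (acoef t i) * x ^+ i.
Proof.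
move=> ht Hz HF HC N1 N2.
have h2 : (ratr t : algC) - 2 != 0.
  have -> : (ratr t : algC) - 2 = ratr (t - 2) by rewrite rmorphB rmorph_nat.
  by rewrite fmorph_eq0 subr_eq0.
have hq : (ratr t : algC)^+2 + ratr t - 1 != 0.
  have -> : (ratr t : algC)^+2 + ratr t - 1 = ratr (t^+2 + t - 1)
    by rewrite rmorphB rmorphD rmorphXn rmorph1.
  by rewrite fmorph_eq0 ratq2.
have h4 : (ratr t : algC)^+4 - 3 * (ratr t)^+3 - (ratr t)^+2 + 3 * ratr t + 1 != 0.
  have -> : (ratr t : algC)^+4 - 3 * (ratr t)^+3 - (ratr t)^+2 + 3 * ratr t + 1
     = ratr (t^+4 - 3*t^+3 - t^+2 + 3*t + 1)
    by rewrite !(rmorphB, rmorphD, rmorphXn, rmorphM, rmorph_nat, rmorph1).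
  by rewrite fmorph_eq0 ratq4.
have [Hf Hy] := core (ratr t) h2 hq h4 x y zeta Hz HF HC N1 N2.
split.
  rewrite rootE /ft map_Poly horner_Poly /= E_ut E_vt E_wt rmorph1; apply/eqP.
  rewrite -[RHS]Hf /fA; ring.
rewrite Hy /AA !big_ord_recr big_ord0 /= /acoef /=.
rewrite E_a0 E_a1 E_a2 E_a3 E_a4 E_a5; ring.
Qed.
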